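(* Let $d$ be prime and let $f:\mathbb{Z}_{c_1}\times\mathbb{Z}_{c_2}\to\mathbb{Z}_d$ be a function that cannot be written as $f(s_1,s_2)=[g_1(s_1)+g_2(s_2)]_d$ for any $g_1:\mathbb{Z}_{c_1}\to\mathbb{Z}_d$, $g_2:\mathbb{Z}_{c_2}\to\mathbb{Z}_d$. Then the only non-signalling distribution $p(m_1,m_2|s_1,s_2)$ ($m_1,m_2\in\mathbb{Z}_d$) whose correlator is $p(k|\mathbf{s})=\delta^k_{f(\mathbf{s})}$ for all $\mathbf{s}$ is $$p(m_1,m_2|s_1,s_2)=\begin{cases}d^{-1}&\text{if }[m_1+m_2]_d=f(s_1,s_2),\\0&\text{otherwise.}\end{cases}$$
   Context: $[\cdot]_d$ is reduction mod $d$. Correlator: $p(k|\mathbf{s})=\sum_{(m_1,m_2):[m_1+m_2]_d=k}p(m_1,m_2|\mathbf{s})$. Non-signalling (bipartite): $\sum_{m_2}p(m_1,m_2|s_1,s_2)$ is independent of $s_2$ and $\sum_{m_1}p(m_1,m_2|s_1,s_2)$ is independent of $s_1$. *)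

(* Defs.v *)
From mathcomp Require Import all_boot all_order all_algebra.
Set Implicit Arguments. Unset Strict Implicit. Unset Printing Implicit Defensive.
Import Order.TTheory GRing.Theory Num.Theory.
Local Open Scope ring_scope.

(* Inputs s1 : 'I_c1 (= Z_{c1}), s2 : 'I_c2, outputs m1 m2 : 'I_d (= Z_d).
   A conditional distribution p m1 m2 s1 s2 = p(m1,m2|s1,s2). *)
Definition behaviour (R : realFieldType) (d c1 c2 : nat) :=
  'I_d -> 'I_d -> 'I_c1 -> 'I_c2 -> R.

Definition is_cond_distr (R : realFieldType) (d c1 c2 : nat)
  (p : behaviour R d c1 c2) : Prop :=
  (forall m1 m2 s1 s2, 0 <= p m1 m2 s1 s2) /\
  (forall s1 s2, \sum_(m1 < d) \sum_(m2 < d) p m1 m2 s1 s2 = 1).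

Definition non_signalling (R : realFieldType) (d c1 c2 : nat)
  (p : behaviour R d c1 c2) : Prop :=
  (forall m1 s1 s2 s2', \sum_(m2 < d) p m1 m2 s1 s2 = \sum_(m2 < d) p m1 m2 s1 s2') /\
  (forall m2 s1 s1' s2, \sum_(m1 < d) p m1 m2 s1 s2 = \sum_(m1 < d) p m1 m2 s1' s2).

Definition correlator (R : realFieldType) (d c1 c2 : nat)
  (p : behaviour R d c1 c2) (k : 'I_d) (s1 : 'I_c1) (s2 : 'I_c2) : R :=
  \sum_(m1 < d) \sum_(m2 < d | ((m1 + m2) %% d)%N == nat_of_ord k) p m1 m2 s1 s2.

Definition additively_separable (d c1 c2 : nat) (f : 'I_c1 -> 'I_c2 -> 'I_d) : Prop :=
  exists (g1 : 'I_c1 -> 'I_d) (g2 : 'I_c2 -> 'I_d),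
    forall s1 s2, nat_of_ord (f s1 s2) = ((g1 s1 + g2 s2) %% d)%N.

Definition uniform_on_f (R : realFieldType) (d c1 c2 : nat)
  (f : 'I_c1 -> 'I_c2 -> 'I_d) : behaviour R d c1 c2 :=
  fun m1 m2 s1 s2 =>
    if ((m1 + m2) %% d)%N == nat_of_ord (f s1 s2) then (d%:R)^-1 else 0.

(* Main.v *)
Require Import Defs.
From mathcomp Require Import all_boot all_order all_algebra.
From mathcomp Require Import ring.
From Stdlib Require Import FunctionalExtensionality.
Import Order.TTheory GRing.Theory Num.Theory.
Local Open Scope ring_scope.

Lemma keyc n (m1 m2 k : 'I_(n.+2)) : (((m1 + m2) %% n.+2)%N == k) = (m2 == k - m1).
Proof.
have -> : ((m1 + m2) %% n.+2)%N = nat_of_ord (m1 + m2)%R by [].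
by rewrite val_eqE [RHS]eq_sym subr_eq addrC eq_sym.
Qed.

Lemma keyc' n (m1 m2 k : 'I_(n.+2)) : (m2 == k - m1) = (m1 == k - m2).
Proof. by rewrite -keyc -keyc addnC. Qed.

Lemma sum1 (R : realFieldType) n (c : 'I_(n.+2)) (x : R) :
  \sum_(m < n.+2) (if m == c then x else 0) = x.
Proof. by rewrite -big_mkcond big_pred1_eq. Qed.

Lemma sep_of n c1 c2 (f : 'I_c1 -> 'I_c2 -> 'I_(n.+2)) :
  (forall s1 s1' s2 s2', f s1 s2 - f s1' s2 = f s1 s2' - f s1' s2') ->
  additively_separable f.
Proof.
move=> H.
case: c1 f H => [|c1] f H; first by exists (fun _ => 0), (fun _ => 0) => [[]].
case: c2 f H => [|c2] f H; first by exists (fun _ => 0), (fun _ => 0) => ? [].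
exists (fun s1 => f s1 ord0), (fun s2 => f ord0 s2 - f ord0 ord0) => s1 s2.
have -> : forall a b : 'I_(n.+2), ((a + b) %% n.+2)%N = nat_of_ord (a + b)%R by [].
congr nat_of_ord.
rewrite -[f s1 s2](subrK (f ord0 s2)) (H s1 ord0 s2 ord0); ring.
Qed.

Theorem lemma2p3p1 (R : realFieldType) (d c1 c2 : nat) (hd : prime d)
  (f : 'I_c1 -> 'I_c2 -> 'I_d) (hf : ~ additively_separable f) :
  (is_cond_distr (uniform_on_f R f) /\ non_signalling (uniform_on_f R f) /\
   (forall k s1 s2, correlator (uniform_on_f R f) k s1 s2 = (k == f s1 s2)%:R))
  /\
  (forall p : behaviour R d c1 c2,
     is_cond_distr p -> non_signalling p ->
     (forall k s1 s2, correlator p k s1 s2 = (k == f s1 s2)%:R) ->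
     p = uniform_on_f R f).
Proof.
move: hd f hf; case: d => [|[|n]] // hd f hf.
have dn0 : (n.+2)%:R != 0 :> R by rewrite pnatr_eq0.
have sumc : forall x : R, \sum_(m < n.+2) x = 1 -> x = (n.+2)%:R^-1.
  move=> x; rewrite sumr_const card_ord => /eqP; rewrite -(mulr_natr x) => /eqP h.
  by rewrite -[x](mulfK dn0) h mul1r.
have m1marg : forall m1 s1 s2,
    \sum_(m2 < n.+2) uniform_on_f R f m1 m2 s1 s2 = (n.+2)%:R^-1.
  by move=> m1 s1 s2; rewrite /uniform_on_f; under eq_bigr do rewrite keyc; rewrite sum1.
have m2marg : forall m2 s1 s2,
    \sum_(m1 < n.+2) uniform_on_f R f m1 m2 s1 s2 = (n.+2)%:R^-1.
  by move=> m2 s1 s2; rewrite /uniform_on_f; under eq_bigr do rewrite keyc keyc'; rewrite sum1.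
split.
  split; [split|split].
  - by move=> m1 m2 s1 s2; rewrite /uniform_on_f; case: ifP => // _; rewrite invr_ge0 ler0n.
  - move=> s1 s2; under eq_bigr do rewrite m1marg.
    by rewrite sumr_const card_ord -(mulr_natr ((n.+2)%:R^-1)) mulVf.
  - by split=> *; rewrite ?m1marg ?m2marg.
  - move=> k s1 s2; rewrite /correlator /uniform_on_f.
    under eq_bigr => m1 _.
      under eq_bigl do rewrite keyc.
      rewrite big_pred1_eq keyc (inj_eq (addIr _)).
      idtac.
      over.

    rewrite sumr_const card_ord; case: (k == f s1 s2) => /=.
      by rewrite -(mulr_natr ((n.+2)%:R^-1)) mulVf.
    by rewrite mul0rn.
move=> p [hpos hsum] [ns1 ns2] hcor.
have Z : forall m1 m2 s1 s2, m2 != f s1 s2 - m1 -> p m1 m2 s1 s2 = 0.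
  move=> m1 m2 s1 s2 hne.
  have h := hcor (m1 + m2) s1 s2.
  have hk : (m1 + m2 == f s1 s2) = false.
    by apply/negbTE; apply: contra hne => /eqP <-; rewrite addrC addKr.
  rewrite hk /correlator in h.
  have hnn : forall i : 'I_(n.+2), true -> 0 <= \sum_(m2' < n.+2 | ((i + m2') %% n.+2)%N == (m1 + m2)%R) p i m2' s1 s2.
    by move=> i _; apply: sumr_ge0 => j _; exact: hpos.
  have h3 := psumr_eq0P hnn h (i:=m1) isT.
  have hnn2 : forall j : 'I_(n.+2), ((m1 + j) %% n.+2)%N == (m1 + m2)%R -> 0 <= p m1 j s1 s2.
    by move=> *; exact: hpos.
  apply: (psumr_eq0P hnn2 h3).
  by rewrite keyc addrC addKr.
have E : forall m1 s1 s2, \sum_(m2 < n.+2) p m1 m2 s1 s2 = p m1 (f s1 s2 - m1) s1 s2.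
  move=> m1 s1 s2; rewrite (bigD1 (f s1 s2 - m1)) //= big1 ?addr0 //.
  by move=> i /Z.
have E' : forall m2 s1 s2, \sum_(m1 < n.+2) p m1 m2 s1 s2 = p (f s1 s2 - m2) m2 s1 s2.
  move=> m2 s1 s2; rewrite (bigD1 (f s1 s2 - m2)) //= big1 ?addr0 //.
  by move=> i hi; apply: Z; rewrite keyc'.
pose A m s1 s2 := \sum_(m2 < n.+2) p m m2 s1 s2.
have Arel : forall m s1 s1' s2,
    A m s1' s2 = A (m + (f s1 s2 - f s1' s2)) s1 s2.
  move=> m s1 s1' s2; rewrite /A E E.
  set m2 := f s1' s2 - m.
  have em : m = f s1' s2 - m2 by rewrite /m2; ring.
  rewrite {1}em -(E' m2 s1' s2) (ns2 m2 s1' s1 s2) E'.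
  have -> : f s1 s2 - m2 = m + (f s1 s2 - f s1' s2) by rewrite /m2; ring.
  have -> : f s1 s2 - (m + (f s1 s2 - f s1' s2)) = m2 by rewrite /m2; ring.
  by [].
have [s1 [s1' [s2 [s2' hw]]]] : exists s1 s1' s2 s2',
    f s1 s2 - f s1' s2 != f s1 s2' - f s1' s2'.
  case: (boolP [exists s1, exists s1', exists s2, exists s2',
                 f s1 s2 - f s1' s2 != f s1 s2' - f s1' s2']).
    move=> /existsP [a /existsP [b /existsP [c /existsP [e h]]]].
    by exists a, b, c, e.
  move=> hn; exfalso; apply: hf; apply: sep_of => a b c e.
  apply/eqP; apply: contraNT hn => h.
  by apply/existsP; exists a; apply/existsP; exists b; apply/existsP; exists c;
     apply/existsP; exists e.
set u := (f s1 s2 - f s1' s2) - (f s1 s2' - f s1' s2').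
have u0 : u != 0 by rewrite subr_eq0.
have per : forall x, A (x + u) s1 s2 = A x s1 s2.
  move=> x.
  pose t := f s1 s2 - f s1' s2.
  pose t' := f s1 s2' - f s1' s2'.
  pose y := x - t'.
  have h1 := Arel y s1 s1' s2.
  have h2 := Arel y s1 s1' s2'.
  have e1 : x + u = y + t by rewrite /y /u /t /t'; ring.
  have e2 : x = y + t' by rewrite /y; ring.
  rewrite e1 [in RHS]e2 /A.
  rewrite /A in h1 h2.
  by rewrite -h1 (ns1 y s1' s2 s2') h2 (ns1 (y+t') s1 s2' s2).
have perk : forall x k, A (x + u *+ k) s1 s2 = A x s1 s2.
  by move=> x; elim=> [|k IH]; rewrite ?mulr0n ?addr0 // mulrSr addrA per IH.
have uU : u \is a GRing.unit.
  move: (@unitZpE n.+2 u erefl); rewrite (natr_Zp u) => ->.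
  rewrite prime_coprime // gtnNdvd //.
  by rewrite lt0n; move: u0; apply: contra => /eqP h; apply/eqP; apply: val_inj.
have cst : forall y, A y s1 s2 = A 0 s1 s2.
  move=> y.
  have -> : y = 0 + u *+ (nat_of_ord (u^-1 * y)).
    by rewrite -mulr_natr natr_Zp mulrA mulrV // mul1r add0r.
  exact: perk.
have A0 : A 0 s1 s2 = (n.+2)%:R^-1.
  apply: sumc; rewrite -(hsum s1 s2); apply: eq_bigr => m _; by rewrite -(cst m).
have Aall : forall m t1 t2, A m t1 t2 = (n.+2)%:R^-1.
  move=> m t1 t2; rewrite /A (ns1 _ _ t2 s2) -/(A _ t1 s2) (Arel m s1 t1 s2).
  by rewrite cst.
apply: functional_extensionality => m1; apply: functional_extensionality => m2.
apply: functional_extensionality => t1; apply: functional_extensionality => t2.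
rewrite /uniform_on_f keyc; case: ifP => [/eqP -> | /negbT h]; last exact: Z.
by rewrite -E -/(A m1 t1 t2) Aall.
Qed.
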